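(* Let $1\le b<\frac{n}{2}-1$ and let $T$ be a tree attaining the maximum value of $M_2$ over $\mathcal{CT}^*_{n,b}$. If $T$ contains a pendent vertex adjacent to a vertex of degree $4$, then $T$ contains no two adjacent vertices of degree $3$.
   Context: A chemical tree is a tree with maximum degree at most $4$. A pendent vertex has degree $1$; a branching vertex has degree greater than $2$. $\mathcal{CT}^*_{n,b}$ is the class of all $n$-vertex chemical trees with exactly $b$ branching vertices. $M_2(G)=\sum_{uv\in E(G)}d_ud_v$, where $d_v$ is the degree of $v$. *)

(* Defs.v *)
From mathcomp Require Import all_boot.
Set Implicit Arguments. Unset Strict Implicit. Unset Printing Implicit Defensive.

Section Graphs.
Variable n : nat.
Implicit Types (e : rel 'I_n) (u v : 'I_n).

Definition simple_graph e := symmetric e /\ irreflexive e.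

Definition deg e u : nat := #|[set v | e u v]|.

(* edges, as unordered pairs encoded by ordered pairs with p.1 < p.2 *)
Definition edges e : {set 'I_n * 'I_n} :=
  [set p : 'I_n * 'I_n | (val p.1 < val p.2) && e p.1 p.2].

Definition is_tree e :=
  simple_graph e /\ (forall u v, connect e u v) /\ #|edges e| = n.-1.

Definition chemical_tree e := is_tree e /\ forall u, deg e u <= 4.

Definition nbranch e : nat := #|[set u | 2 < deg e u]|.

Definition CTstar (b : nat) e := chemical_tree e /\ nbranch e = b.

Definition M2 e : nat := \sum_(p in edges e) deg e p.1 * deg e p.2.

End Graphs.

(* Main.v *)
Require Import Defs.
From mathcomp Require Import all_boot zify.
Set Implicit Arguments. Unset Strict Implicit. Unset Printing Implicit Defensive.

Section G.
Variable n : nat.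
Implicit Types (g : rel 'I_n).

Lemma sum_eq1 (T : finType) (c : T) (G : T -> nat) :
  \sum_(p : T) (p == c) * G p = G c.
Proof.
rewrite (bigD1 c) //= eqxx mul1n big1 ?addn0 // => p /negbTE ->; by rewrite mul0n.
Qed.

Lemma deg_sum g a : deg g a = \sum_(b : 'I_n) g a b.
Proof.
rewrite /deg -sum1_card big_mkcond /=; apply: eq_bigr => b _; rewrite inE.
by case: (g a b).
Qed.

Lemma edge_sum g (F : 'I_n -> 'I_n -> nat) :
  symmetric g -> irreflexive g -> (forall a b, F a b = F b a) ->
  2 * \sum_(p in edges g) F p.1 p.2 = \sum_(p : 'I_n * 'I_n) g p.1 p.2 * F p.1 p.2.
Proof.
move=> sg ig sF.
have -> : \sum_(p : 'I_n * 'I_n) g p.1 p.2 * F p.1 p.2 =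
  \sum_(p : 'I_n * 'I_n) ((val p.1 < val p.2) && g p.1 p.2) * F p.1 p.2 +
  \sum_(p : 'I_n * 'I_n) ((val p.2 < val p.1) && g p.1 p.2) * F p.1 p.2.
  rewrite -big_split /=; apply: eq_bigr => [[a b]] _ /=.
  case: (ltngtP (val a) (val b)) => h /=.
  - by rewrite addn0.
  - by [].
  - by rewrite (val_inj h) ig.
have -> : \sum_(p : 'I_n * 'I_n) ((val p.2 < val p.1) && g p.1 p.2) * F p.1 p.2 =
  \sum_(p : 'I_n * 'I_n) ((val p.1 < val p.2) && g p.1 p.2) * F p.1 p.2.
  rewrite (reindex_inj (h := fun p : 'I_n * 'I_n => (p.2, p.1))) /=.
    by apply: eq_bigr => [[a b]] _ /=; rewrite sg sF.
  by move=> [a b] [c d] /= [-> ->].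
rewrite addnn -mul2n; congr (2 * _).
rewrite big_mkcond /=; apply: eq_bigr => p _; rewrite /edges inE.
have -> : ((p.1 < p.2) && g p.1 p.2) = ((val p.1 < val p.2) && g p.1 p.2) by [].
by case: ifP => h; rewrite ?mul1n ?mul0n.
Qed.

Definition rm g (c d : 'I_n) : rel 'I_n :=
  fun a b => [&& g a b, (a, b) != (c, d) & (a, b) != (d, c)].

Lemma claimA (T : finType) (g g' : rel T) (E : pred T) s w :
  (forall a b, g a b -> g' a b || E b) -> connect g s w ->
  connect g' s w \/ exists2 c, E c & connect g' c w.
Proof.
move=> H /connectP [p pp ->]; elim: p s pp => [|z p IH] s /=.
  by move=> _; left; exact: connect0.
case/andP=> gsz pz; case: (IH z pz) => [h|h].
  case/orP: (H _ _ gsz) => [g'sz|Ez].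
    by left; apply: connect_trans (connect1 g'sz) h.
  by right; exists z.
by right.
Qed.

Lemma rm_sub g c d a b : g a b -> rm g c d a b || (b == c) || (b == d).
Proof.
move=> gab; rewrite /rm gab /=.
case: (eqVneq (a, b) (c, d)) => [[_ ->]|h1]; first by rewrite eqxx orbT.
case: (eqVneq (a, b) (d, c)) => [[_ ->]|h2]; first by rewrite eqxx !orbT.
by [].
Qed.

Lemma rmA g c d s w : connect g s w ->
  [\/ connect (rm g c d) s w, connect (rm g c d) c w | connect (rm g c d) d w].
Proof.
move=> h; case: (claimA (g' := rm g c d) (E := [pred z | (z == c) || (z == d)]) _ h).
- move=> a b gab; rewrite /= orbA; exact: rm_sub.
- by move=> ?; constructor 1.
- by case=> z /= /orP [] /eqP -> ?; [constructor 2 | constructor 3].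
Qed.

Lemma rm_sym g c d : symmetric g -> symmetric (rm g c d).
Proof.
move=> sg a b; rewrite /rm sg !xpair_eqE.
by case: (a == c); case: (a == d); case: (b == c); case: (b == d); rewrite /= ?andbF.
Qed.

Lemma rm_irr g c d : irreflexive g -> irreflexive (rm g c d).
Proof. by move=> ig a; rewrite /rm ig. Qed.

Lemma rm_swap g c d : rm g c d =2 rm g d c.
Proof. move=> a b; rewrite /rm; congr (_ && _); exact: andbC. Qed.

Lemma iso_conn (T : finType) (g : rel T) u w : (forall z, ~~ g u z) -> connect g u w -> w = u.
Proof.
move=> H /connectP [[|z p] /= pp ->] //.
by case/andP: pp => guz; rewrite (negbTE (H z)) in guz.
Qed.

Lemma crossing (T : finType) (g : rel T) (S : {set T}) a b :
  a \in S -> b \notin S -> connect g a b ->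
  exists c d, [/\ c \in S, d \notin S & g c d].
Proof.
move=> aS bS /connectP [p pp bl]; elim: p a aS pp bl => [|z p IH] a aS /=.
  by move=> _ e; rewrite e aS in bS.
case/andP=> gaz pz bl; case: (boolP (z \in S)) => zS.
  exact: IH zS pz bl.
by exists a, z.
Qed.

Definition opair (a b : 'I_n) : 'I_n * 'I_n := if val a < val b then (a, b) else (b, a).

Lemma opair_edge g a b : symmetric g -> irreflexive g -> g a b -> opair a b \in edges g.
Proof.
move=> sg ig gab; rewrite /opair /edges inE.
case: (ltngtP (val a) (val b)) => h /=.
- by rewrite h gab.
- by rewrite h sg gab.
- by rewrite (val_inj h) ig in gab.
Qed.

Lemma opair_mem (S : {set 'I_n}) a b : a \in S -> b \notin S ->
  ~~ (((opair a b).1 \in S) && ((opair a b).2 \in S)).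
Proof.
by move=> aS bS; rewrite /opair; case: ifP => _ /=; rewrite ?(negbTE bS) ?andbF.
Qed.

Lemma lower_bound g : symmetric g -> irreflexive g -> (forall a b, connect g a b) ->
  0 < n -> n.-1 <= #|edges g|.
Proof.
move=> sg ig cg n0.
have main : forall k, k < n -> exists S : {set 'I_n},
   #|S| = k.+1 /\ k <= #|[set p in edges g | (p.1 \in S) && (p.2 \in S)]|.
  elim=> [|k IH] hk.
    by exists [set Ordinal n0]; rewrite cards1.
  have [S [cS lS]] := IH (ltnW hk).
  have [w wS] : exists w, w \notin S.
    apply/existsP; rewrite -negb_forall; apply/negP => /forallP allS.
    have : #|S| = #|'I_n|.
      by apply/eqP; rewrite eqn_leq max_card /= subset_leq_card //; apply/subsetP => z _; apply: allS.
    by rewrite cS card_ord => e; rewrite e ltnn in hk.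
  have [r rS] : exists r, r \in S.
    by apply/set0Pn; rewrite -card_gt0 cS.
  have [c [d [hc dS gcd]]] := crossing rS wS (cg r w).
  exists (d |: S); split; first by rewrite cardsU1 dS cS.
  set ES := [set p in edges g | (p.1 \in S) && (p.2 \in S)] in lS *.
  set ES' := [set p in edges g | (p.1 \in d |: S) && (p.2 \in d |: S)].
  have sub : opair c d |: ES \subset ES'.
    apply/subsetP => p; rewrite in_setU1 => /orP [/eqP ->|].
      rewrite inE opair_edge //= /opair; case: ifP => _ /=; by rewrite !inE eqxx hc ?orbT.
    rewrite !inE => /andP [pe /andP [h1 h2]].
    by rewrite pe h1 h2 !orbT.
  have nin : opair c d \notin ES by rewrite inE negb_and opair_mem ?orbT.
  apply: leq_trans (subset_leq_card sub); by rewrite cardsU1 nin add1n ltnS.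
have hn : n.-1 < n by move: n0; case: (n).
have [S [_ lS]] := main n.-1 hn.
apply: leq_trans lS _; apply: subset_leq_card; apply/subsetP => p; rewrite inE; by case/andP.
Qed.

Lemma sum_eqb (T : finType) (d : T) : \sum_(i : T) (i == d) = 1.
Proof. by rewrite (bigD1 d) //= eqxx big1 // => i /negbTE ->. Qed.

Lemma sum_pair_eq (a c d : 'I_n) : \sum_(b : 'I_n) ((a, b) == (c, d)) = (a == c).
Proof.
under eq_bigr => b _ do rewrite xpair_eqE.
case: (a == c) => /=; first exact: sum_eqb.
by rewrite big1.
Qed.

Lemma handshake g : symmetric g -> irreflexive g ->
  2 * #|edges g| = \sum_(a : 'I_n) deg g a.
Proof.
move=> sg ig; rewrite -sum1_card (edge_sum (F := fun _ _ => 1)) //.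
rewrite -(pair_bigA _ (fun a b => g a b * 1)) /=.
by apply: eq_bigr => a _; rewrite deg_sum; apply: eq_bigr => b _; rewrite muln1.
Qed.

Definition newrel g (x y u v : 'I_n) : rel 'I_n := fun a b =>
  [|| rm (rm g x y) u v a b, (a, b) == (v, y), (a, b) == (y, v), (a, b) == (x, u)
    | (a, b) == (u, x)].

End G.

Ltac crush := repeat match goal with
  | H : is_true ?l |- _ => rewrite H
  | H : ?l = false |- _ => rewrite H end.

Ltac cs t z := first [case: (eqVneq t z) => [->|/negbTE ?] | idtac].


Section K.
Variable n : nat.
Implicit Types (g : rel 'I_n).

Lemma pointwise g (x y u v : 'I_n) (p : 'I_n * 'I_n) :
  g x y -> g y x -> g u v -> g v u ->
  g v y = false -> g y v = false -> g x u = false -> g u x = false ->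
  (x == y) = false -> (x == u) = false -> (x == v) = false ->
  (y == u) = false -> (y == v) = false -> (u == v) = false ->
  newrel g x y u v p.1 p.2 + ((p == (x, y)) + (p == (y, x)) + (p == (u, v)) + (p == (v, u)))
  = g p.1 p.2 + ((p == (v, y)) + (p == (y, v)) + (p == (x, u)) + (p == (u, x))).
Proof.
move=> h1 h2 h3 h4 h5 h6 h7 h8 d1 d2 d3 d4 d5 d6.
have d1' := d1; have d2' := d2; have d3' := d3; have d4' := d4; have d5' := d5; have d6' := d6.
rewrite eq_sym in d1'; rewrite eq_sym in d2'; rewrite eq_sym in d3'.
rewrite eq_sym in d4'; rewrite eq_sym in d5'; rewrite eq_sym in d6'.
case: p => a b; rewrite /newrel /rm /= !xpair_eqE.
cs a x; cs a y; cs a u; cs a v; cs b x; cs b y; cs b u; cs b v; crush; rewrite ?eqxx /=; crush; rewrite ?andbT ?orbF; done.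
Qed.
End K.

Section Key.
Variable n : nat.
Implicit Types (g : rel 'I_n).

Lemma leaf_nb g u v z : deg g u = 1 -> g u v -> g u z -> z = v.
Proof.
move=> du guv guz; move/eqP: du => /cards1P [w hw].
have : v \in [set b | g u b] by rewrite inE.
have : z \in [set b | g u b] by rewrite inE.
by rewrite hw !inE => /eqP -> /eqP ->.
Qed.

Lemma pair_swap (a c p q : 'I_n) : ((c, a) == (p, q)) = ((a, c) == (q, p)).
Proof. by rewrite !xpair_eqE andbC. Qed.

Lemma aux4 (A B : nat) (p q r s : bool) : A + (p + q + r + s) = B + (s + q + p + r) -> A = B.
Proof. case: p; case: q; case: r; case: s => /=; lia. Qed.

Lemma aux5 (A B : nat) : 2 * A + (3 * 3 + 3 * 3 + 1 * 4 + 4 * 1) = 2 * B + (4 * 3 + 3 * 4 + 3 * 1 + 1 * 3) -> A = B.+2.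
Proof. lia. Qed.

Lemma key b g (x y u v : 'I_n) : CTstar b g -> g x y -> deg g x = 3 -> deg g y = 3 ->
  g u v -> deg g u = 1 -> deg g v = 4 -> connect (rm g x y) x v -> ~~ g v y ->
  CTstar b (newrel g x y u v) /\ M2 (newrel g x y u v) = (M2 g).+2.
Proof.
move=> [[[[sg ig] [cg eg]] d4] nb] gxy dx dy guv du dv cxv nvy.
have d1 : (x == y) = false by apply/eqP => e; rewrite e ig in gxy.
have d2 : (x == u) = false by apply/eqP => e; rewrite e du in dx.
have d3 : (x == v) = false by apply/eqP => e; rewrite e dv in dx.
have d4' : (y == u) = false by apply/eqP => e; rewrite e du in dy.
have d5 : (y == v) = false by apply/eqP => e; rewrite e dv in dy.
have d6 : (u == v) = false by apply/eqP => e; rewrite e ig in guv.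
have gyx : g y x by rewrite sg.
have gvu : g v u by rewrite sg.
have gvy : g v y = false by apply/negbTE.
have gyv : g y v = false by rewrite sg.
have gux : g u x = false.
  by apply/negP => /(leaf_nb du guv) e; rewrite e eqxx in d3.
have gxu : g x u = false by rewrite sg.
set N := newrel g x y u v.
have PW := fun p => pointwise p gxy gyx guv gvu gvy gyv gxu gux d1 d2 d3 d4' d5 d6.
have degE : forall a, deg N a = deg g a.
  move=> a.
  have : \sum_(c : 'I_n) (N a c + (((a, c) == (x, y)) + ((a, c) == (y, x)) + ((a, c) == (u, v)) + ((a, c) == (v, u))))
    = \sum_(c : 'I_n) (g a c + (((a, c) == (v, y)) + ((a, c) == (y, v)) + ((a, c) == (x, u)) + ((a, c) == (u, x)))).
    by apply: eq_bigr => c _; exact: (PW (a, c)).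
  rewrite !big_split /= !sum_pair_eq -!deg_sum => h.
  exact: aux4 h.
have sN : symmetric N.
  move=> a c; rewrite /N /newrel [in RHS](rm_sym u v (rm_sym x y sg)) ![in RHS](pair_swap a c).
  set r1 := rm _ _ _ a c; set e1 := (a, c) == (v, y); set e2 := (a, c) == (y, v).
  set e3 := (a, c) == (x, u); set e4 := (a, c) == (u, x).
  by case: r1; case: e1; case: e2; case: e3; case: e4.
have iN : irreflexive N.
  move=> a; rewrite /N /newrel (rm_irr u v (rm_irr x y ig)) /= !xpair_eqE.
  have d1' := d1; have d2' := d2; have d3' := d3; have d4'' := d4'; have d5' := d5; have d6' := d6.
  rewrite eq_sym in d1'; rewrite eq_sym in d2'; rewrite eq_sym in d3'.
  rewrite eq_sym in d4''; rewrite eq_sym in d5'; rewrite eq_sym in d6'.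
  cs a x; cs a y; cs a u; cs a v; crush; rewrite ?eqxx /=; crush; rewrite ?andbF ?andbT //.
have eN : #|edges N| = n.-1.
  have h1 := handshake sN iN; have h2 := handshake sg ig.
  rewrite (eq_bigr _ (fun a _ => degE a)) in h1.
  by rewrite -eg; apply/eqP; rewrite -(eqn_pmul2l (isT : 0 < 2)) h1 h2.
have M2E : M2 N = (M2 g).+2.
  have h1 := edge_sum (F := fun a c => deg N a * deg N c) sN iN (fun a c => mulnC _ _).
  have h2 := edge_sum (F := fun a c => deg g a * deg g c) sg ig (fun a c => mulnC _ _).
  rewrite /M2.
  have h3 : \sum_(p : 'I_n * 'I_n) (N p.1 p.2 * (deg g p.1 * deg g p.2) + ((p == (x, y)) * (deg g p.1 * deg g p.2) + (p == (y, x)) * (deg g p.1 * deg g p.2) + (p == (u, v)) * (deg g p.1 * deg g p.2) + (p == (v, u)) * (deg g p.1 * deg g p.2)))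
     = \sum_(p : 'I_n * 'I_n) (g p.1 p.2 * (deg g p.1 * deg g p.2) + ((p == (v, y)) * (deg g p.1 * deg g p.2) + (p == (y, v)) * (deg g p.1 * deg g p.2) + (p == (x, u)) * (deg g p.1 * deg g p.2) + (p == (u, x)) * (deg g p.1 * deg g p.2))).
    by apply: eq_bigr => p _; rewrite -!mulnDl PW.
  rewrite !big_split /= !sum_eq1 /= dx dy du dv in h3.
  rewrite (eq_bigr _ (fun p _ => congr1 (fun z => N p.1 p.2 * z) (congr2 muln (degE p.1) (degE p.2)))) in h1.
  rewrite /= in h1.
  rewrite -h1 -h2 in h3.
  exact: aux5 h3.
have e3N : forall a c, rm (rm g x y) u v a c -> N a c by move=> a c h; rewrite /N /newrel h.
have iso : forall z, ~~ rm (rm g x y) u v u z.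
  move=> z; apply/negP; rewrite /rm => /and3P [/and3P [guz _ _] h1 _].
  by rewrite (leaf_nb du guv guz) eqxx in h1.
have sym1 := rm_sym x y sg.
have cvx : connect (rm g x y) v x by rewrite (sym_connect_sym sym1).
have c3vx : connect (rm (rm g x y) u v) v x.
  case: (rmA u v cvx) => // /(iso_conn iso) e; by rewrite e eqxx in d2.
have lift : forall s w, connect (rm (rm g x y) u v) s w -> connect N s w.
  move=> s w; apply: connect_sub => a c h; apply: connect1; exact: e3N.
have cNxv : connect N x v by rewrite (sym_connect_sym sN); exact: lift _ _ c3vx.
have base : forall s, [|| s == x, s == y, s == u | s == v] -> connect N x s.
  move=> s /or4P [] /eqP ->.
  - exact: connect0.
  - apply: connect_trans cNxv (connect1 _); by rewrite /N /newrel eqxx orbT.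
  - apply: connect1; by rewrite /N /newrel eqxx !orbT.
  - exact cNxv.
have cN : forall w, connect N x w.
  move=> w; case: (rmA x y (cg x w)) => h;
  case: (rmA u v h) => h'; apply: connect_trans (base _ _) (lift _ _ h');
  by rewrite eqxx ?orbT.
have cNall : forall a c, connect N a c.
  move=> a c; apply: connect_trans (cN c); by rewrite (sym_connect_sym sN).
split=> //; split; last first.
  by rewrite -nb /nbranch; apply: eq_card => z; rewrite !inE degE.
split; last by move=> z; rewrite degE.
by split.
Qed.
End Key.

Lemma sum_deg n (g : rel 'I_n) :
  \sum_(a : 'I_n) deg g a = \sum_(p : 'I_n * 'I_n) g p.1 p.2.
Proof.
rewrite -(pair_bigA _ (fun a c => (g a c : nat))); apply: eq_bigr => a _; exact: deg_sum.
Qed.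

Lemma rm_pw n (g : rel 'I_n) c d (p : 'I_n * 'I_n) : g c d -> g d c -> (c == d) = false ->
  rm g c d p.1 p.2 + ((p == (c, d)) + (p == (d, c))) = g p.1 p.2.
Proof.
move=> h1 h2 h3; case: p => a b; rewrite /rm /=.
case: (eqVneq (a, b) (c, d)) => [[-> ->]|n1].
  by rewrite xpair_eqE h3 h1.
case: (eqVneq (a, b) (d, c)) => [[-> ->]|n2] /=.
  by rewrite h2.
by rewrite !andbT !addn0.
Qed.

Lemma aux6 (A B : nat) : 2 * A + (1 + 1) = 2 * B -> B <= A -> False.
Proof. lia. Qed.

Lemma claimB n (g : rel 'I_n) x y v : is_tree g -> g x y ->
  connect (rm g x y) x v -> connect (rm g x y) y v -> False.
Proof.
move=> [[sg ig] [cg eg]] gxy cxv cyv.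
have s1 := rm_sym x y sg; have i1 := rm_irr x y ig.
have cxy : connect (rm g x y) x y.
  apply: connect_trans cxv _; by rewrite (sym_connect_sym s1).
have cx : forall w, connect (rm g x y) x w.
  move=> w; case: (rmA x y (cg x w)) => // h; exact: connect_trans cxy h.
have call : forall a c, connect (rm g x y) a c.
  move=> a c; apply: connect_trans (cx c); by rewrite (sym_connect_sym s1).
have n0 : 0 < n by apply: leq_ltn_trans (leq0n x) (ltn_ord x).
have lb := lower_bound s1 i1 call n0.
have d1 : (x == y) = false by apply/eqP => e; rewrite e ig in gxy.
have h : \sum_(p : 'I_n * 'I_n) (rm g x y p.1 p.2 + ((p == (x, y)) + (p == (y, x))))
   = \sum_(p : 'I_n * 'I_n) g p.1 p.2.
  by apply: eq_bigr => p _; apply: rm_pw; rewrite // sg.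
rewrite !big_split /= !sum_eqb -!sum_deg -handshake // -handshake // eg in h.
exact: aux6 h lb.
Qed.

Theorem lemma11 (n b : nat) (e : rel 'I_n) :
  1 <= b -> 2 * b + 2 < n ->
  CTstar b e ->
  (forall e' : rel 'I_n, CTstar b e' -> M2 e' <= M2 e) ->
  (exists u v : 'I_n, [/\ e u v, deg e u = 1 & deg e v = 4]) ->
  ~ (exists x y : 'I_n, [/\ e x y, deg e x = 3 & deg e y = 3]).
Proof.
move=> _ _ CT mx [u [v [guv du dv]]] [x [y [gxy dx dy]]].
have CT' := CT; move: CT' => [[[[sg ig] [cg eg]] _] _].
have tr : is_tree e by case: CT => [[]].
have dxv : (v == x) = false by apply/eqP => h; rewrite h dx in dv.
have dyv : (v == y) = false by apply/eqP => h; rewrite h dy in dv.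
have d1 : (x == y) = false by apply/eqP => h; rewrite h ig in gxy.
have gyx : e y x by rewrite sg.
case: (rmA x y (cg x v)) => [cxv|cxv|cyv].
- have nvy : ~~ e v y.
    apply/negP => evy; apply: (claimB tr gxy cxv); apply: connect1.
    by rewrite /rm sg evy /= !xpair_eqE eq_sym d1 dxv eqxx !andbF.
  have [CTN M2N] := key CT gxy dx dy guv du dv cxv nvy.
  have := mx _ CTN; rewrite M2N => h; move: (leq_trans (leqnSn _) h); by rewrite ltnn.
- have nvy : ~~ e v y.
    apply/negP => evy; apply: (claimB tr gxy cxv); apply: connect1.
    by rewrite /rm sg evy /= !xpair_eqE eq_sym d1 dxv eqxx !andbF.
  have [CTN M2N] := key CT gxy dx dy guv du dv cxv nvy.
  have := mx _ CTN; rewrite M2N => h; move: (leq_trans (leqnSn _) h); by rewrite ltnn.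
- have nvx : ~~ e v x.
    apply/negP => evx; apply: (claimB tr gxy _ cyv); apply: connect1.
    by rewrite /rm sg evx /= !xpair_eqE d1 dyv eqxx !andbF.
  have cyv' : connect (rm e y x) y v by rewrite -(eq_connect (rm_swap e x y)).
  have [CTN M2N] := key CT gyx dy dx guv du dv cyv' nvx.
  have := mx _ CTN; rewrite M2N => h; move: (leq_trans (leqnSn _) h); by rewrite ltnn.
Qed.
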